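(* Let $r\geq 0$ and $k$ be integers, and let $n,m$ be integers with $n-1\geq m\geq 1$. Then \begin{align*} \sum_{l=0}^{n-m}\binom{n}{l}S_{1}(n-l,m)\tilde{A}_{l}^{(r,k)} &=r\sum_{l=0}^{n-m-1}\sum_{a=0}^{n-l-m-1}\frac{(-1)^{a+1}a!}{a+2}\binom{n-1}{l+m}\binom{n-l-m-1}{a}S_{1}(l+m,m)\tilde{A}_{n-l-m-a-1}^{(r+1,k)}\\ &\quad +\sum_{l=0}^{n-m-1}\frac{1}{n-l-m}\binom{n-1}{l+m}S_{1}(l+m,m)\left(\tilde{A}_{n-l-m}^{(r+1,k-1)}-\tilde{A}_{n-l-m}^{(r+1,k)}\right)\\ &\quad +\sum_{l=0}^{n-m}\binom{n-1}{l+m-1}S_{1}(l+m-1,m-1)\tilde{A}_{n-l-m}^{(r,k)}(-1). \end{align*}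
   Context: For $k\in\mathbf{Z}$, $Lif_{k}(x)=\sum_{m=0}^{\infty}\frac{x^{m}}{m!(m+1)^{k}}$. For integers $r\geq 0$, $k\in\mathbf{Z}$, the polynomials $\tilde{A}_{n}^{(r,k)}(x)$ are defined by \[\left(\frac{t}{(1+t)\log(1+t)}\right)^{r}Lif_{k}\left(-\log(1+t)\right)(1+t)^{x}=\sum_{n=0}^{\infty}\tilde{A}_{n}^{(r,k)}(x)\frac{t^{n}}{n!},\] and $\tilde{A}_{n}^{(r,k)}=\tilde{A}_{n}^{(r,k)}(0)$. $S_{1}(n,m)$ denotes the signed Stirling numbers of the first kind, defined by $x(x-1)\cdots(x-n+1)=\sum_{m=0}^{n}S_{1}(n,m)x^{m}$. *)

(* Defs.v *)
From mathcomp Require Import all_boot all_order all_algebra.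
Set Implicit Arguments. Unset Strict Implicit. Unset Printing Implicit Defensive.
Import Order.TTheory GRing.Theory Num.Theory.
Local Open Scope ring_scope.

Section FPS.
Variable R : numFieldType.

Definition fps := nat -> R.

Definition fps_mul (a b : fps) : fps :=
  fun n => \sum_(i < n.+1) a i * b (n - i)%N.

Definition fps_one : fps := fun n => if n == 0%N then 1 else 0.

Fixpoint fps_pow (a : fps) (m : nat) : fps :=
  if m is m'.+1 then fps_mul a (fps_pow a m') else fps_one.

Fixpoint fps_inv_list (a : fps) (n : nat) : seq R :=
  if n is n'.+1 then
    let s := fps_inv_list a n' in
    rcons s (- (a 0%N)^-1 * \sum_(i < n'.+1) a (n'.+1 - i)%N * nth 0 s i)
  else [:: (a 0%N)^-1].

Definition fps_inv (a : fps) : fps := fun n => nth 0 (fps_inv_list a n) n.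

(* composition c(u(t)) for u with zero constant term *)
Definition fps_comp (c u : fps) : fps :=
  fun n => \sum_(j < n.+1) c j * fps_pow u j n.

Definition fps_log1p : fps :=
  fun n => if n == 0%N then 0 else (-1) ^+ n.+1 / n%:R.

Definition fps_1pt : fps := fun n => if (n <= 1)%N then 1 else 0.

Definition fps_log1p_div_t : fps := fun n => fps_log1p n.+1.

(* (1+t)^x = sum_n x(x-1)...(x-n+1)/n! t^n *)
Definition fps_binom (x : R) : fps :=
  fun n => (\prod_(i < n) (x - i%:R)) / n`!%:R.

(* Lif_k(u) = sum_m u^m / (m! (m+1)^k) : coefficient sequence *)
Definition Lif_coef (k : int) : fps :=
  fun m => (m`!%:R * (m.+1%:R ^ k))^-1.

(* generating function (t/((1+t)log(1+t)))^r Lif_k(-log(1+t)) (1+t)^x *)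
Definition Atilde_gf (r : nat) (k : int) (x : R) : fps :=
  fps_mul
    (fps_mul (fps_pow (fps_inv (fps_mul fps_1pt fps_log1p_div_t)) r)
             (fps_comp (Lif_coef k) (fun n => - fps_log1p n)))
    (fps_binom x).

Definition Atilde (r : nat) (k : int) (n : nat) (x : R) : R :=
  n`!%:R * Atilde_gf r k x n.

End FPS.

Definition S1 (n m : nat) : int :=
  (\prod_(i < n) ('X - (i%:R)%:P) : {poly int})`_m.

(* Main.v *)
From HB Require Import structures.
Require Import Defs.
From mathcomp Require Import all_boot all_order all_algebra.
From mathcomp Require Import boolp.
From mathcomp Require Import ring zify.
From Stdlib Require Import FunctionalExtensionality.
Set Implicit Arguments. Unset Strict Implicit. Unset Printing Implicit Defensive.
Import Order.TTheory GRing.Theory Num.Theory.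
Local Open Scope ring_scope.

Section PS.
Variable R : numFieldType.
Implicit Types a b c d u : fps R.

Definition tr N (a : fps R) : {poly R} := \poly_(i < N) a i.

Lemma mulE N n a b : (n < N)%N -> fps_mul a b n = (tr N a * tr N b)`_n.
Proof.
move=> nN; rewrite coefM /fps_mul; apply: eq_bigr => i _.
rewrite /tr !coef_poly (leq_ltn_trans _ nN) ?(leq_ltn_trans (leq_subr _ _) nN) //.
by rewrite -ltnS.
Qed.

Lemma mul_trunc N (p p' q : {poly R}) : (forall i, (i < N)%N -> p`_i = p'`_i) ->
  forall n, (n < N)%N -> (p * q)`_n = (p' * q)`_n.
Proof.
move=> H n nN; rewrite !coefM; apply: eq_bigr => i _; rewrite H //.
by apply: leq_ltn_trans nN; rewrite -ltnS.
Qed.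

Lemma fps_mulC a b : fps_mul a b = fps_mul b a.
Proof. by apply: functional_extensionality => n; rewrite !(mulE _ _ (ltnSn n)) mulrC. Qed.

Lemma fps_mulA a b c : fps_mul a (fps_mul b c) = fps_mul (fps_mul a b) c.
Proof.
apply: functional_extensionality => n.
have h1 : forall x y, forall i, (i < n.+1)%N -> (tr n.+1 (fps_mul x y))`_i = (tr n.+1 x * tr n.+1 y)`_i.
  by move=> x y i ii; rewrite coef_poly ii (mulE _ _ ii).
rewrite !(mulE _ _ (ltnSn n)) mulrC (mul_trunc _ (h1 b c)) // mulrC.
rewrite (mul_trunc _ (h1 a b)) // mulrA //.
Qed.

Definition fps_add a b : fps R := fun n => a n + b n.
Definition fps_opp a : fps R := fun n => - a n.
Definition fps_zero : fps R := fun _ => 0.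

Lemma fps_addA : associative fps_add.
Proof. by move=> a b c; apply: functional_extensionality => n; rewrite /fps_add addrA. Qed.
Lemma fps_addC : commutative fps_add.
Proof. by move=> a b; apply: functional_extensionality => n; rewrite /fps_add addrC. Qed.
Lemma fps_add0 : left_id fps_zero fps_add.
Proof. by move=> a; apply: functional_extensionality => n; rewrite /fps_add add0r. Qed.
Lemma fps_addN : left_inverse fps_zero fps_opp fps_add.
Proof. by move=> a; apply: functional_extensionality => n; rewrite /fps_add /fps_opp addNr. Qed.

HB.instance Definition _ := gen_eqMixin (fps R).
HB.instance Definition _ := gen_choiceMixin (fps R).
HB.instance Definition _ := GRing.isZmodule.Build (fps R) fps_addA fps_addC fps_add0 fps_addN.

Lemma addfE a b n : (a + b) n = a n + b n. Proof. by []. Qed.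
Lemma oppfE a n : (- a) n = - a n. Proof. by []. Qed.
Lemma zerofE n : (0 : fps R) n = 0. Proof. by []. Qed.

Lemma fps_mul1 : left_id (@fps_one R) (@fps_mul R).
Proof.
move=> a; apply: functional_extensionality => n.
rewrite /fps_mul big_ord_recl /fps_one /= mul1r subn0 big1 ?addr0 // => i _.
by rewrite mul0r.
Qed.
Lemma fps_mulDl : left_distributive (@fps_mul R) (@GRing.add (fps R)).
Proof.
move=> a b c; apply: functional_extensionality => n.
rewrite /fps_mul /= addfE -big_split; apply: eq_bigr => i _; by rewrite addfE mulrDl.
Qed.

HB.instance Definition _ := GRing.Zmodule_isComPzRing.Build (fps R) fps_mulA fps_mulC fps_mul1 fps_mulDl.

Lemma mulfE a b : a * b = fps_mul a b. Proof. by []. Qed.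
Lemma onefE : (1 : fps R) = fps_one R. Proof. by []. Qed.

Lemma powfE a m : fps_pow a m = a ^+ m.
Proof. elim: m => [|m IH]; first by []. by rewrite exprS -IH. Qed.

Lemma mulnfE (r : nat) a n : ((r%:R : fps R) * a) n = r%:R * a n.
Proof.
elim: r => [|r IH]; first by rewrite !mul0r.
by rewrite -addn1 !natrD !mulrDl addfE IH !mul1r.
Qed.

Definition D a : fps R := fun n => n.+1%:R * a n.+1.

Lemma DD a b : D (a + b) = D a + D b.
Proof. by apply: functional_extensionality => n; rewrite /D !addfE mulrDr. Qed.
Lemma DN a : D (- a) = - D a.
Proof. by apply: functional_extensionality => n; rewrite /D !oppfE mulrN. Qed.
Lemma D1 : D 1 = 0.
Proof. by apply: functional_extensionality => n; rewrite /D onefE /fps_one /= mulr0. Qed.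

Lemma DM a b : D (a * b) = D a * b + a * D b.
Proof.
apply: functional_extensionality => n.
rewrite addfE /D !mulfE !(@mulE n.+2) //.
have h : forall c i, (i < n.+1)%N -> (tr n.+2 c)^`()`_i = (tr n.+2 (D c))`_i.
  move=> c i ii; have h1 : (i.+1 < n.+2)%N by [].
  have h2 : (i < n.+2)%N by rewrite ltnS ltnW.
  by rewrite coef_deriv !coef_poly h1 h2 /D mulr_natl.
rewrite mulr_natl -coef_deriv derivM coefD (mul_trunc _ (h a)) // mulrC.
by rewrite [tr n.+2 a * _]mulrC (mul_trunc _ (h b)) // [tr n.+2 (D b) * _]mulrC.
Qed.

Lemma DMn (r : nat) a : D (r%:R * a) = r%:R * D a.
Proof.
have Dn : D (r%:R) = 0.
  apply: functional_extensionality => n.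
  by rewrite /D -[(r%:R : fps R)]mulr1 mulnfE onefE /fps_one /= !mulr0.
by rewrite DM Dn mul0r add0r.
Qed.

Definition Xs : fps R := fun n => if n == 1%N then 1 else 0.

Lemma mulX a n : (Xs * a) n = if n is n'.+1 then a n' else 0.
Proof.
rewrite mulfE /fps_mul big_ord_recl /Xs /= mul0r add0r.
case: n => [|n]; first by rewrite big_ord0.
rewrite big_ord_recl /= mul1r subSS subn0 big1 ?addr0 // => i _.
by rewrite mul0r.
Qed.

Lemma DX a : D (Xs * a) = a + Xs * D a.
Proof.
apply: functional_extensionality => n.
rewrite addfE /D !mulX; case: n => [|n]; first by rewrite mul1r addr0.
by rewrite -(addn1 n.+1) natrD mulrDl mul1r addrC.
Qed.


Lemma onept_E : fps_1pt R = 1 + Xs.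
Proof.
apply: functional_extensionality => n; rewrite addfE onefE /fps_1pt /fps_one /Xs.
by case: n => [|[|n]] /=; rewrite ?addr0 ?add0r ?addr0.
Qed.

Lemma log_E : fps_log1p R = Xs * fps_log1p_div_t R.
Proof.
apply: functional_extensionality => n; rewrite mulX /fps_log1p_div_t.
by case: n.
Qed.

Lemma prod_m1 n : \prod_(i < n) (-1 - i%:R : R) = (-1) ^+ n * n`!%:R.
Proof.
elim: n => [|n IH]; first by rewrite big_ord0 expr0 mul1r.
rewrite big_ord_recr /= IH factS natrM exprS -natr1.
ring.
Qed.

Lemma Bm1_E n : fps_binom (-1 : R) n = (-1) ^+ n.
Proof.
rewrite /fps_binom prod_m1 -mulrA mulfV ?mulr1 //.
by rewrite pnatr_eq0 -lt0n fact_gt0.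
Qed.

Lemma Bm1_inv : (1 + Xs) * fps_binom (-1 : R) = 1.
Proof.
apply: functional_extensionality => n.
rewrite mulrDl mul1r addfE mulX onefE /fps_one Bm1_E.
case: n => [|n] /=; first by rewrite expr0 addr0.
by rewrite exprS mulN1r Bm1_E addNr.
Qed.

Lemma B0 : fps_binom (0 : R) = 1.
Proof.
apply: functional_extensionality => n; rewrite /fps_binom onefE /fps_one.
case: n => [|n] /=; first by rewrite big_ord0 div1r invr1.
by rewrite big_ord_recl /= subr0 mul0r mul0r.
Qed.

Lemma DL : D (fps_log1p R) = fps_binom (-1 : R).
Proof.
apply: functional_extensionality => n; rewrite /D Bm1_E /fps_log1p /=.
rewrite !exprS mulrCA mulfV ?mulr1 ?mulN1r ?opprK //.
by rewrite pnatr_eq0.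
Qed.

Lemma M0 : fps_mul (fps_1pt R) (fps_log1p_div_t R) 0 = 1.
Proof.
rewrite /fps_mul big_ord1 /fps_1pt /fps_log1p_div_t /fps_log1p /=.
by rewrite mul1r expr2 mulN1r opprK divr1.
Qed.

Lemma DMcoef (a : nat) : D (fps_mul (fps_1pt R) (fps_log1p_div_t R)) a = (-1) ^+ a / (a.+2)%:R.
Proof.
rewrite -mulfE onept_E mulrDl mul1r /D addfE mulX /fps_log1p_div_t /fps_log1p /=.
have h1 : (a.+1%:R : R) != 0 by rewrite pnatr_eq0.
have h2 : (a.+2%:R : R) != 0 by rewrite pnatr_eq0.
move: h1 h2; rewrite !exprS -!natr1 => h1 h2.
by field; rewrite h1 h2.
Qed.


Lemma inv_list_size a n : size (fps_inv_list a n) = n.+1.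
Proof. by elim: n => [|n IH] //=; rewrite size_rcons IH. Qed.

Lemma inv_list_nth a n i : (i <= n)%N -> nth 0 (fps_inv_list a n) i = fps_inv a i.
Proof.
elim: n => [|n IH]; first by rewrite leqn0 => /eqP ->.
rewrite leq_eqVlt => /orP [/eqP -> //| ii].
by rewrite /= nth_rcons inv_list_size ii IH.
Qed.

Lemma inv_S a n : fps_inv a n.+1 =
  - (a 0%N)^-1 * \sum_(i < n.+1) a (n.+1 - i)%N * fps_inv a i.
Proof.
rewrite {1}/fps_inv /= nth_rcons inv_list_size ltnn eqxx.
congr (_ * _); apply: eq_bigr => i _; rewrite inv_list_nth //.
by rewrite -ltnS.
Qed.

Lemma inv_mul a : a 0%N != 0 -> fps_inv a * a = 1.
Proof.
move=> a0; apply: functional_extensionality => n.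
rewrite mulfE onefE /fps_mul /fps_one; case: n => [|n] /=.
  by rewrite big_ord1 /fps_inv /= mulVf.
rewrite big_ord_recr /= subnn inv_S.
set S1 := \sum_(i < n.+1) _.
set S2 := \sum_(i < n.+1) _.
have -> : S1 = S2 by apply: eq_bigr => i _; rewrite mulrC.
by field.
Qed.


Lemma mulXn j a n : (Xs ^+ j * a) n = if (n < j)%N then 0 else a (n - j)%N.
Proof.
elim: j a n => [|j IH] a n; first by rewrite expr0 mul1r subn0.
rewrite exprS -mulrA mulX; case: n => [|n] //.
Qed.

Lemma shiftE u : u 0%N = 0 -> u = Xs * (fun n => u n.+1).
Proof.
move=> u0; apply: functional_extensionality => n; rewrite mulX.
by case: n.
Qed.

Lemma pow_shift u j n : u 0%N = 0 -> (n < j)%N -> (u ^+ j) n = 0.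
Proof.
move=> u0 nj; rewrite (shiftE u0) exprMn mulXn.
by rewrite nj.
Qed.

Lemma compE c u N n : u 0%N = 0 -> (n <= N)%N ->
  fps_comp c u n = \sum_(j < N.+1) c j * (u ^+ j) n.
Proof.
move=> u0 nN; rewrite /fps_comp.
under eq_bigr => j _ do rewrite powfE.
have nN' : (n.+1 <= N.+1)%N by [].
rewrite (big_ord_widen _ (fun j => c j * (u ^+ j) n) nN') big_mkcond /=.
apply: eq_bigr => j _; case: ifP => // /negbT.
by rewrite -leqNgt => jn; rewrite pow_shift ?mulr0.
Qed.

Lemma Dpow u j : D (u ^+ j.+1) = j.+1%:R * (u ^+ j * D u).
Proof.
elim: j => [|j IH]; first by rewrite expr1 expr0 !mul1r.
rewrite exprS DM IH.
rewrite -[j.+2%:R]natr1 exprS.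
ring.
Qed.

Lemma Dcomp c u : u 0%N = 0 -> D (fps_comp c u) = fps_comp (D c) u * D u.
Proof.
move=> u0; apply: functional_extensionality => n.
rewrite {1}/D (compE c (N:=n.+1) u0) // mulr_sumr big_ord_recl expr0 onefE /fps_one /=.
rewrite !mulr0 add0r mulfE /fps_mul.
under [RHS]eq_bigr => p _ do rewrite (compE _ (N:=n) u0 (ltn_ord p)) mulr_suml.
rewrite exchange_big /=; apply: eq_bigr => j _.
rewrite /bump leq0n add1n mulrCA.
rewrite (_ : n.+1%:R * (u ^+ j.+1) n.+1 = D (u ^+ j.+1) n) // Dpow mulnfE.
rewrite mulfE /fps_mul !mulr_sumr; apply: eq_bigr => i _.
rewrite /D; ring.
Qed.

Lemma comp_sub c c' u : fps_comp c' u - fps_comp c u = fps_comp (c' - c) u.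
Proof.
apply: functional_extensionality => n.
rewrite addfE oppfE /fps_comp -sumrB; apply: eq_bigr => j _.
by rewrite addfE oppfE mulrBl.
Qed.

Lemma comp_X d u : u 0%N = 0 -> fps_comp (Xs * d) u = u * fps_comp d u.
Proof.
move=> u0; apply: functional_extensionality => n.
rewrite (compE _ (N:=n.+1) u0) // big_ord_recl mulX mul0r add0r.
rewrite [in RHS]mulfE /fps_mul.
under [RHS]eq_bigr => p _ do rewrite (compE _ (N:=n) u0 (leq_subr p n)) mulr_sumr.
rewrite exchange_big /=; apply: eq_bigr => j _.
rewrite /bump leq0n add1n mulX exprS mulfE /fps_mul mulr_sumr; apply: eq_bigr => i _.
ring.
Qed.


Lemma lif_rel (k : int) : Lif_coef R (k - 1) - Lif_coef R k = Xs * D (Lif_coef R k).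
Proof.
apply: functional_extensionality => n; rewrite addfE oppfE mulX /Lif_coef.
case: n => [|n]; first by rewrite !exp1rz subrr.
rewrite /D.
have hb : (n.+2%:R : R) != 0 by rewrite pnatr_eq0.
have hf : ((n.+1)`!%:R : R) != 0 by rewrite pnatr_eq0 -lt0n fact_gt0.
have hk : (n.+2%:R : R) ^ k != 0 by rewrite expfz_neq0.
rewrite expfzDr // exprN1.
move: hb hk; rewrite -!natr1 => hb hk.
by field; rewrite hf hb hk.
Qed.

End PS.

Lemma S1_rec n m : S1 n.+1 m = (if m is m'.+1 then S1 n m' else 0) - S1 n m *+ n.
Proof.
rewrite /S1 big_ord_recr /= mulrBr coefB coefMX coefMC.
by case: m => [|m] //=; rewrite mulr_natr.
Qed.

Lemma S1_0 m : S1 0 m = (m == 0%N)%:R.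
Proof. by rewrite /S1 big_ord0 coef1. Qed.

Lemma S1_lt j m : (j < m)%N -> S1 j m = 0.
Proof.
elim: j m => [|j IH] [|m] //; first by rewrite S1_0.
rewrite ltnS => jm; rewrite S1_rec IH // IH ?mul0rn ?subr0 //.
by apply: ltnW.
Qed.

Lemma S1_recR (R : numFieldType) n m :
  (S1 n.+1 m.+1)%:~R = (S1 n m)%:~R - n%:R * (S1 n m.+1)%:~R :> R.
Proof. by rewrite S1_rec rmorphB rmorphMn /= mulr_natl. Qed.


Section Main.
Variable R : numFieldType.
Local Notation X := (Xs R).
Local Notation B := (fps_binom (-1 : R)).

Definition sS (m : nat) : fps R := fun j => (S1 j m)%:~R / j`!%:R.

Lemma factR_neq0 n : (n`!%:R : R) != 0.
Proof. by rewrite pnatr_eq0 -lt0n fact_gt0. Qed.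

Lemma s_rec m : (1 + X) * D (sS m.+1) = sS m.
Proof.
apply: functional_extensionality => n.
rewrite mulrDl mul1r addfE mulX /D /sS.
case: n => [|n].
  rewrite addr0 S1_recR mul0r subr0 /=.
  by rewrite !divr1 mul1r.
rewrite S1_recR (factS n.+1) natrM.
have h1 := factR_neq0 n.+1.
have h2 : (n.+2%:R : R) != 0 by rewrite pnatr_eq0.
move: h2; rewrite -!natr1 => h2.
by field; rewrite h1 h2.
Qed.

Lemma Ds m : D (sS m.+1) = sS m * B.
Proof. by rewrite -(s_rec m) mulrAC Bm1_inv mul1r. Qed.


Definition Mser : fps R := fps_mul (fps_1pt R) (fps_log1p_div_t R).
Definition Pser : fps R := fps_inv Mser.
Definition user : fps R := fun n => - fps_log1p R n.
Definition Qser (k : int) : fps R := fps_comp (Lif_coef R k) user.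
Definition Hs : fps R := fun a => (-1) ^+ a.+1 / (a.+2)%:R.

Lemma Atilde_E r k n x : Atilde r k n x = n`!%:R * ((Pser ^+ r * Qser k) * fps_binom x) n.
Proof. by rewrite /Atilde /Atilde_gf powfE. Qed.

Lemma PM : Pser * Mser = 1.
Proof. by apply: inv_mul; rewrite /Mser M0 oner_neq0. Qed.

Lemma Mser_E : Mser = (1 + X) * fps_log1p_div_t R.
Proof. by rewrite /Mser -mulfE onept_E. Qed.

Lemma P_ldt : Pser * fps_log1p_div_t R = B.
Proof.
rewrite -[LHS]mulr1 -Bm1_inv.
have -> : Pser * fps_log1p_div_t R * ((1 + X) * B) = (Pser * ((1 + X) * fps_log1p_div_t R)) * B by ring.
by rewrite -Mser_E PM mul1r.
Qed.

Lemma Hs_E : Hs = - D Mser.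
Proof.
apply: functional_extensionality => a; rewrite oppfE /Mser DMcoef /Hs.
by rewrite exprS mulN1r mulNr.
Qed.

Lemma DP : D Pser = Pser * Pser * Hs.
Proof.
have e : D Pser * Mser + Pser * D Mser = 0 by rewrite -DM PM D1.
have e2 : D Pser * Mser = - (Pser * D Mser) by apply/eqP; rewrite -addr_eq0 e.
have -> : D Pser = (D Pser * Mser) * Pser by rewrite -mulrA [Mser * _]mulrC PM mulr1.
rewrite e2 Hs_E; ring.
Qed.

Lemma DPpow r : D (Pser ^+ r) = r%:R * (Pser ^+ r.+1 * Hs).
Proof.
case: r => [|r]; first by rewrite expr0 D1 mul0r.
by rewrite Dpow DP !exprS; ring.
Qed.

Lemma u0 : user 0%N = 0.
Proof. by rewrite /user /fps_log1p /= oppr0. Qed.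

Lemma user_E : user = - (X * fps_log1p_div_t R).
Proof. by rewrite -log_E. Qed.

Lemma DQ k : D (Qser k) = - (fps_comp (D (Lif_coef R k)) user * B).
Proof.
rewrite /Qser (Dcomp _ u0) (_ : D user = - B) ?mulrN //.
by rewrite (_ : user = - fps_log1p R) // DN DL.
Qed.

Lemma Qdiff k : Qser (k - 1) - Qser k = user * fps_comp (D (Lif_coef R k)) user.
Proof. by rewrite /Qser comp_sub lif_rel comp_X // u0. Qed.

Lemma keyY r k : X * (Pser ^+ r * D (Qser k)) =
  Pser ^+ r.+1 * Qser (k - 1) - Pser ^+ r.+1 * Qser k.
Proof.
rewrite -mulrBr Qdiff DQ user_E -P_ldt.
set C := fps_comp _ _; rewrite exprS; ring.
Qed.

Lemma keyF r k n' m' :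
  n'.+1`!%:R * (sS m'.+1 * (Pser ^+ r * Qser k)) n'.+1 =
  n'`!%:R * ((sS m' * ((Pser ^+ r * Qser k) * B)) n'
     + r%:R * (sS m'.+1 * (Hs * (Pser ^+ r.+1 * Qser k))) n'
     + (sS m'.+1 * (Pser ^+ r * D (Qser k))) n').
Proof.
have E : D (sS m'.+1 * (Pser ^+ r * Qser k)) =
    sS m' * ((Pser ^+ r * Qser k) * B)
     + r%:R * (sS m'.+1 * (Hs * (Pser ^+ r.+1 * Qser k)))
     + sS m'.+1 * (Pser ^+ r * D (Qser k)).
  rewrite DM Ds DM DPpow !exprS; ring.
transitivity (n'`!%:R * D (sS m'.+1 * (Pser ^+ r * Qser k)) n').
  by rewrite /D factS natrM; ring.
by rewrite E !addfE mulnfE.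
Qed.


Lemma binfR n j : (j <= n)%N -> ('C(n, j)%:R : R) * j`!%:R * (n - j)`!%:R = n`!%:R.
Proof. by move=> jn; rewrite -(bin_fact jn) !natrM mulrA. Qed.

Lemma sum_shift (F : nat -> R) m N : (m <= N)%N -> (forall j, (j < m)%N -> F j = 0) ->
  \sum_(j < N) F j = \sum_(0 <= l < N - m) F (l + m)%N.
Proof.
move=> mN F0; rewrite -(big_mkord xpredT) (big_cat_nat (leq0n m) mN) /=.
rewrite big_nat_cond big1 ?add0r; first by have := big_addn 0 N m xpredT F; rewrite add0n.
by move=> j /andP[/andP[_ jm] _]; rewrite F0.
Qed.

Lemma conv_LHS m n (G : fps R) : (m <= n)%N ->
  \sum_(0 <= l < (n - m).+1) 'C(n, l)%:R * (S1 (n - l) m)%:~R * (l`!%:R * G l)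
  = n`!%:R * (sS m * G) n.
Proof.
move=> mn; rewrite [sS m * G]mulrC mulfE /fps_mul mulr_sumr.
rewrite -(big_mkord xpredT (fun i => n`!%:R * (G i * sS m (n - i)%N))).
rewrite (big_cat_nat (leq0n (n - m).+1) (_ : (n - m).+1 <= n.+1)%N) /=; last first.
  by rewrite ltnS leq_subr.
rewrite [X in _ = _ + X]big_nat_cond [X in _ = _ + X]big1 ?addr0; last first.
  move=> i /andP[/andP[h1 h2] _]; rewrite /sS S1_lt ?mul0r ?mulr0 //; lia.
apply: eq_big_nat => l /andP[_ hl]; rewrite /sS.
have hln : (l <= n)%N by lia.
rewrite -(binfR hln); have := factR_neq0 (n - l) => h.
by field.
Qed.

Lemma conv3 n' m' (Y : fps R) : (m' <= n')%N ->
  \sum_(0 <= l < (n' - m').+1) 'C(n', l + m')%:R * (S1 (l + m') m')%:~R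
     * ((n' - (l + m'))`!%:R * Y (n' - (l + m'))%N)
  = n'`!%:R * (sS m' * Y) n'.
Proof.
move=> mn; rewrite mulfE /fps_mul mulr_sumr.
rewrite (sum_shift (F := fun j => n'`!%:R * (sS m' j * Y (n' - j)%N)) (m := m')); last 2 first.
- by apply: leqW.
- by move=> j jm; rewrite /sS S1_lt // mul0r mul0r mulr0.
rewrite subSn //; apply: eq_big_nat => l /andP[_ hl]; rewrite /sS.
have hln : (l + m' <= n')%N by lia.
rewrite -(binfR hln); have := factR_neq0 (l + m') => h.
by field.
Qed.

Lemma conv1 n' m (G : fps R) : (m <= n')%N ->
  \sum_(0 <= l < n'.+1 - m) \sum_(0 <= a < n'.+1 - (l + m))
    ((-1) ^+ a.+1 * a`!%:R / (a + 2)%:R) * 'C(n', l + m)%:R * 'C(n' - (l + m), a)%:R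
      * (S1 (l + m) m)%:~R * ((n' - (l + m) - a)`!%:R * G (n' - (l + m) - a)%N)
  = n'`!%:R * (sS m * (Hs * G)) n'.
Proof.
move=> mn; rewrite mulfE /fps_mul mulr_sumr.
rewrite (sum_shift (F := fun j => n'`!%:R * (sS m j * (Hs * G) (n' - j)%N)) (m := m)); last 2 first.
- by apply: leqW.
- by move=> j jm; rewrite /sS S1_lt // mul0r mul0r mulr0.
apply: eq_big_nat => l /andP[_ hl].
have hln : (l + m <= n')%N by lia.
rewrite (_ : (n'.+1 - (l + m) = (n' - (l + m)).+1)%N); last by lia.
rewrite big_mkord mulfE /fps_mul !mulr_sumr; apply: eq_bigr => a _.
have ha : (a <= n' - (l + m))%N by rewrite -ltnS.
rewrite /sS /Hs -(binfR hln) -(binfR ha) addn2.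
have := factR_neq0 (l + m) => h1.
have := factR_neq0 a => h2.
have h3 : (a.+2%:R : R) != 0 by rewrite pnatr_eq0.
field; apply/andP; split => //; by rewrite addrC -natrD addn2.
Qed.

Lemma conv2 n' m (Z Y : fps R) : (m <= n')%N -> (forall p, Y p = Z p.+1) ->
  \sum_(0 <= l < n'.+1 - m) ((n'.+1 - (l + m))%:R)^-1 * 'C(n', l + m)%:R
     * (S1 (l + m) m)%:~R * ((n'.+1 - (l + m))`!%:R * Z (n'.+1 - (l + m))%N)
  = n'`!%:R * (sS m * Y) n'.
Proof.
move=> mn hY; rewrite mulfE /fps_mul mulr_sumr.
rewrite (sum_shift (F := fun j => n'`!%:R * (sS m j * Y (n' - j)%N)) (m := m)); last 2 first.
- by apply: leqW.
- by move=> j jm; rewrite /sS S1_lt // mul0r mul0r mulr0.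
apply: eq_big_nat => l /andP[_ hl].
have hln : (l + m <= n')%N by lia.
rewrite (_ : (n'.+1 - (l + m) = (n' - (l + m)).+1)%N); last by lia.
rewrite hY /sS factS natrM -(binfR hln).
have := factR_neq0 (l + m) => h1.
have := factR_neq0 (n' - (l + m)) => h2.
have h3 : ((n' - (l + m)).+1%:R : R) != 0 by rewrite pnatr_eq0.
field; apply/andP; split => //; by rewrite addrC natr1.
Qed.

End Main.

Theorem theorem6 (R : numFieldType) (r : nat) (k : int) (n m : nat)
  (hm1 : (1 <= m)%N) (hmn : (m <= n - 1)%N) :
  \sum_(0 <= l < (n - m).+1)
      'C(n, l)%:R * (S1 (n - l) m)%:~R * Atilde r k l (0 : R)
  = r%:R * \sum_(0 <= l < n - m)
        \sum_(0 <= a < n - l - m)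
          ((-1) ^+ a.+1 * a`!%:R / (a + 2)%:R) * 'C(n - 1, l + m)%:R
          * 'C(n - l - m - 1, a)%:R * (S1 (l + m) m)%:~R
          * Atilde r.+1 k (n - l - m - a - 1) (0 : R)
    + \sum_(0 <= l < n - m)
        ((n - l - m)%:R)^-1 * 'C(n - 1, l + m)%:R * (S1 (l + m) m)%:~R
        * (Atilde r.+1 (k - 1) (n - l - m) (0 : R) - Atilde r.+1 k (n - l - m) (0 : R))
    + \sum_(0 <= l < (n - m).+1)
        'C(n - 1, l + m - 1)%:R * (S1 (l + m - 1) (m - 1))%:~R
        * Atilde r k (n - l - m) (-1 : R).
Proof.
case: m hm1 hmn => [//|m'] _ hmn.
case: n hmn => [//|n'] hmn.
have hmn' : (m'.+1 <= n')%N by lia.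
transitivity (n'.+1`!%:R * (sS R m'.+1 * (Pser R ^+ r * Qser R k)) n'.+1).
  rewrite -conv_LHS; last by lia.
  by apply: eq_bigr => l _; rewrite Atilde_E B0 mulr1.
rewrite keyF.
rewrite (_ : forall x y z : R, n'`!%:R * (x + r%:R * y + z) =
   n'`!%:R * x + r%:R * (n'`!%:R * y) + n'`!%:R * z); last by move=> x y z; ring.
rewrite -(conv1 _ hmn') -(conv3 _ (ltnW hmn')).
rewrite -(conv2 (Z := Pser R ^+ r.+1 * Qser R (k - 1) - Pser R ^+ r.+1 * Qser R k) hmn'); last first.
  by move=> p; rewrite -keyY mulX.
rewrite [LHS](_ : forall x y z : R, x + y + z = y + z + x); last by move=> x y z; ring.
apply: congr2; [apply: congr2; [apply: congr2 => //|]|].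
- apply: eq_big_nat => l /andP[_ hl].
  rewrite (_ : (n'.+1 - l - m'.+1 = n'.+1 - (l + m'.+1))%N); last by lia.
  apply: eq_big_nat => a /andP[_ ha].
  rewrite (_ : (n'.+1 - 1 = n')%N); last by lia.
  rewrite (_ : (n'.+1 - (l + m'.+1) - 1 = n' - (l + m'.+1))%N); last by lia.
  rewrite (_ : (n'.+1 - (l + m'.+1) - a - 1 = n' - (l + m'.+1) - a)%N); last by lia.
  by rewrite Atilde_E B0 (mulr1 (Pser R ^+ r.+1 * Qser R k)).
- apply: eq_big_nat => l /andP[_ hl].
  rewrite (_ : (n'.+1 - l - m'.+1 = n'.+1 - (l + m'.+1))%N); last by lia.
  rewrite (_ : (n'.+1 - 1 = n')%N); last by lia.
  rewrite !Atilde_E B0 (mulr1 (Pser R ^+ r.+1 * Qser R k)) (mulr1 (Pser R ^+ r.+1 * Qser R (k - 1))).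
  by rewrite (addfE (Pser R ^+ r.+1 * Qser R (k - 1))) (oppfE (Pser R ^+ r.+1 * Qser R k)) mulrBr.
- apply: eq_big_nat => l /andP[_ hl].
  rewrite (_ : (n'.+1 - 1 = n')%N); last by lia.
  rewrite (_ : (l + m'.+1 - 1 = l + m')%N); last by lia.
  rewrite (_ : (m'.+1 - 1 = m')%N); last by lia.
  rewrite (_ : (n'.+1 - l - m'.+1 = n' - (l + m'))%N); last by lia.
  by rewrite Atilde_E.
Qed.
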